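(* Let $P$ be a poset, let $\iota:\mathbf{JF}^+_P\to\mathbf{JF}_P$ be the inclusion, let $F_P$ send a frame-generating join-specification $\mathcal{U}$ to $\eta:P\to\mathcal{I}_{\mathcal{U}}$, $p\mapsto p^\downarrow$ (and an inclusion $\mathcal{U}_1\subseteq\mathcal{U}_2$ to the unique frame morphism $\mathcal{I}_{\mathcal{U}_1}\to\mathcal{I}_{\mathcal{U}_2}$ with $p^\downarrow\mapsto p^\downarrow$), let $G_P:\mathbf{JC}_P\to\mathbf{JF}^+_P$ send $e$ to $(\mathcal{U}_e)^-$ (arrows to inclusions), and let $G'_P:\mathbf{Frm}_P\to\mathbf{JF}^+_P$ be the restriction of $G_P$ to $\mathbf{Frm}_P$. Then $F_P\circ\iota\dashv G_P$ (with $F_P\circ\iota$ regarded as a functor $\mathbf{JF}^+_P\to\mathbf{JC}_P$), $F_P\dashv G'_P$ (with $F_P:\mathbf{JF}_P\to\mathbf{Frm}_P$ and $G'_P$ regarded as a functor into $\mathbf{JF}_P$), and $F_P\circ\iota\dashv G'_P$ (with $F_P\circ\iota:\mathbf{JF}^+_P\to\mathbf{Frm}_P$).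
   Context: A join-specification for $P$ is a set $\mathcal{U}\subseteq\wp(P)$ such that $\bigvee S$ exists in $P$ for every $S\in\mathcal{U}$ and $\{p\}\in\mathcal{U}$ for every $p\in P$. A $\mathcal{U}$-ideal is a down-closed $C$ with $\bigvee S\in C$ whenever $S\in\mathcal{U}$, $S\subseteq C$; $\mathcal{I}_{\mathcal{U}}$ is the complete lattice of $\mathcal{U}$-ideals; $\Gamma_{\mathcal{U}}(S)$ is the smallest $\mathcal{U}$-ideal containing $S$; $\mathcal{U}^+=\{S:\bigvee S\text{ exists and }\bigvee S\in\Gamma_{\mathcal{U}}(S)\}$; $\mathcal{U}$ is maximal if $\mathcal{U}=\mathcal{U}^+$ and frame-generating if $\mathcal{I}_{\mathcal{U}}$ is a frame. $\mathbf{JF}_P$ (resp. $\mathbf{JF}^+_P$) is the thin category of frame-generating (resp. maximal frame-generating) join-specifications ordered by inclusion. A join-completion of $P$ is an order embedding $e:P\to L$ into a complete lattice with every element of $L$ a join of elements of $e[P]$. $\mathbf{JC}_P$ has join-completions as objects and, as arrows $e_1\to e_2$, completely join-preserving $f:L_1\to L_2$ with $f\circ e_1=e_2$. $\mathbf{Frm}_P$ has as objects join-completions $e:P\to L$ with $L$ a frame, and as arrows $e_1\to e_2$ frame morphisms (lattice homomorphisms preserving arbitrary joins) $f:L_1\to L_2$ with $f\circ e_1=e_2$. For a join-completion $e$, $\mathcal{U}_e=\{S\subseteq P:\bigvee S\text{ exists and }e(\bigvee S)=\bigvee e[S]\}$, and for a join-specification $\mathcal{V}$, $\mathcal{V}^-$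 is the largest frame-generating join-specification contained in $\mathcal{V}$ (which exists and, for $\mathcal{V}=\mathcal{U}_e$, is maximal). *)

(* Defs.v *)
From Stdlib Require Import ProofIrrelevance FunctionalExtensionality PropExtensionality.
Set Implicit Arguments.
Unset Strict Implicit.

Lemma sig_eq (A : Type) (Q : A -> Prop) (x y : {a | Q a}) :
  proj1_sig x = proj1_sig y -> x = y.
Proof. destruct x as [a ha], y as [b hb]; simpl; intros ->; f_equal; apply proof_irrelevance. Qed.

Record Category := {
  Ob :> Type;
  Hom : Ob -> Ob -> Type;
  cid : forall a, Hom a a;
  ccomp : forall a b c, Hom b c -> Hom a b -> Hom a c;
  ccomp_id_l : forall a b (f : Hom a b), ccomp (cid b) f = f;
  ccomp_id_r : forall a b (f : Hom a b), ccomp f (cid a) = f;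
  ccomp_assoc : forall a b c d (f : Hom c d) (g : Hom b c) (h : Hom a b),
      ccomp f (ccomp g h) = ccomp (ccomp f g) h }.
Arguments Hom {_} _ _.
Arguments cid {_} _.
Arguments ccomp {_ _ _ _} _ _.

Record Functor (C D : Category) := {
  fob :> C -> D;
  fmap : forall a b, Hom a b -> Hom (fob a) (fob b);
  fmap_id : forall a, fmap (cid a) = cid (fob a);
  fmap_comp : forall a b c (f : Hom b c) (g : Hom a b),
      fmap (ccomp f g) = ccomp (fmap f) (fmap g) }.
Arguments fmap {_ _} _ {_ _} _.

Definition FComp (C D E : Category) (G : Functor D E) (F : Functor C D) : Functor C E.
Proof.
  refine {| fob := fun a => G (F a);
            fmap := fun a b f => fmap G (fmap F f) |}.
  - intros a; rewrite fmap_id; apply fmap_id.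
  - intros a b c f g; rewrite fmap_comp; apply fmap_comp.
Defined.

Definition Adjunction (C D : Category) (F : Functor C D) (G : Functor D C) : Prop :=
  exists (phi : forall (c : C) (d : D), Hom (F c) d -> Hom c (G d))
         (psi : forall (c : C) (d : D), Hom c (G d) -> Hom (F c) d),
    (forall c d h, psi c d (phi c d h) = h) /\
    (forall c d k, phi c d (psi c d k) = k) /\
    (forall (c c' : C) (d d' : D) (f : Hom c' c) (g : Hom d d') (h : Hom (F c) d),
        phi c' d' (ccomp g (ccomp h (fmap F f))) =
        ccomp (fmap G g) (ccomp (phi c d h) f)).

Record Poset := {
  pcar :> Type;
  ple : pcar -> pcar -> Prop;
  ple_refl : forall x, ple x x;
  ple_trans : forall x y z, ple x y -> ple y z -> ple x z;
  ple_anti : forall x y, ple x y -> ple y x -> x = y }.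
Arguments ple {p} _ _.

Section PosetDefs.
Variable L : Poset.
Definition is_ub (S : L -> Prop) (x : L) := forall s, S s -> ple s x.
Definition is_lb (S : L -> Prop) (x : L) := forall s, S s -> ple x s.
Definition is_lub (S : L -> Prop) (x : L) :=
  is_ub S x /\ forall y, is_ub S y -> ple x y.
Definition is_glb (S : L -> Prop) (x : L) :=
  is_lb S x /\ forall y, is_lb S y -> ple y x.
Definition pair (a b : L) : L -> Prop := fun t => t = a \/ t = b.
Definition complete := forall S : L -> Prop, exists x, is_lub S x.
Definition is_frame :=
  complete /\
  forall (a : L) (S : L -> Prop) (j m : L),
    is_lub S j -> is_glb (pair a j) m ->
    is_lub (fun t => exists s, S s /\ is_glb (pair a s) t) m.
End PosetDefs.

Definition image (A B : Type) (f : A -> B) (S : A -> Prop) : B -> Prop :=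
  fun y => exists x, S x /\ y = f x.

Definition join_preserving (L1 L2 : Poset) (f : L1 -> L2) :=
  forall S x, is_lub S x -> is_lub (image f S) (f x).
Definition meet_preserving (L1 L2 : Poset) (f : L1 -> L2) :=
  forall a b m, is_glb (pair a b) m -> is_glb (pair (f a) (f b)) (f m).

Lemma image_comp (A B C : Type) (f : B -> C) (g : A -> B) S :
  image f (image g S) = image (fun x => f (g x)) S.
Proof.
  apply functional_extensionality; intro y; apply propositional_extensionality;
  unfold image; split.
  - intros [b [[a [Ha ->]] ->]]; eauto.
  - intros [a [Ha ->]]; exists (g a); eauto.
Qed.

Lemma join_preserving_comp (L1 L2 L3 : Poset) (f : L2 -> L3) (g : L1 -> L2) :
  join_preserving f -> join_preserving g -> join_preserving (fun x => f (g x)).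
Proof. intros hf hg S x h; rewrite <- image_comp; apply hf, hg, h. Qed.

Lemma meet_preserving_comp (L1 L2 L3 : Poset) (f : L2 -> L3) (g : L1 -> L2) :
  meet_preserving f -> meet_preserving g -> meet_preserving (fun x => f (g x)).
Proof. intros hf hg a b m h; apply hf, hg, h. Qed.

Section JoinSpec.
Variable P : Poset.

Definition singleton (p : P) : P -> Prop := fun q => q = p.

Definition is_join_spec (U : (P -> Prop) -> Prop) :=
  (forall S, U S -> exists x, is_lub S x) /\ (forall p, U (singleton p)).

Definition is_ideal (U : (P -> Prop) -> Prop) (C : P -> Prop) :=
  (forall x y, ple x y -> C y -> C x) /\
  (forall S x, U S -> (forall s, S s -> C s) -> is_lub S x -> C x).

Definition ideal_le (U : (P -> Prop) -> Prop) (C D : {C | is_ideal U C}) :=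
  forall x, proj1_sig C x -> proj1_sig D x.

Lemma ideal_le_anti U (C D : {C | is_ideal U C}) : ideal_le C D -> ideal_le D C -> C = D.
Proof.
  intros h1 h2; apply sig_eq; apply functional_extensionality; intro x;
  apply propositional_extensionality; split; auto.
Qed.

Definition IdealPoset (U : (P -> Prop) -> Prop) : Poset :=
  {| pcar := {C | is_ideal U C};
     ple := @ideal_le U;
     ple_refl := fun C x h => h;
     ple_trans := fun C D E h1 h2 x h => h2 x (h1 x h);
     ple_anti := @ideal_le_anti U |}.

Definition Gamma (U : (P -> Prop) -> Prop) (S : P -> Prop) : P -> Prop :=
  fun x => forall C, is_ideal U C -> (forall s, S s -> C s) -> C x.

Definition Uplus (U : (P -> Prop) -> Prop) : (P -> Prop) -> Prop :=
  fun S => exists x, is_lub S x /\ Gamma U S x.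

Definition maximal (U : (P -> Prop) -> Prop) := forall S, U S <-> Uplus U S.
Definition frame_generating (U : (P -> Prop) -> Prop) := is_frame (IdealPoset U).

Lemma downset_ideal (U : (P -> Prop) -> Prop) (p : P) :
  is_ideal U (fun q => ple q p).
Proof.
  split.
  - intros x y h1 h2; exact (ple_trans h1 h2).
  - intros S x _ hS [_ hl]; apply hl; exact hS.
Qed.

Definition eta (U : (P -> Prop) -> Prop) (p : P) : IdealPoset U :=
  exist _ (fun q => ple q p) (downset_ideal U p).

Definition is_join_completion (L : Poset) (e : P -> L) :=
  complete L /\
  (forall p q, ple p q <-> ple (e p) (e q)) /\
  (forall x : L, exists S, (forall y, S y -> exists p, y = e p) /\ is_lub S x).

Definition Ue (L : Poset) (e : P -> L) : (P -> Prop) -> Prop :=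
  fun S => exists m, is_lub S m /\ is_lub (image e S) (e m).

(* V^- : the largest frame-generating join-specification contained in V,
   given as the union of all such (which is the largest one when it exists) *)
Definition minus (V : (P -> Prop) -> Prop) : (P -> Prop) -> Prop :=
  fun S => exists W, is_join_spec W /\ frame_generating W /\
                     (forall T, W T -> V T) /\ W S.

Definition JFob := {U : (P -> Prop) -> Prop | is_join_spec U /\ frame_generating U}.
Definition JFhom (U V : JFob) : Prop := forall S, proj1_sig U S -> proj1_sig V S.

Definition JFCat : Category.
Proof.
  refine {| Ob := JFob; Hom := JFhom;
            cid := fun U S h => h;
            ccomp := fun U V W (f : JFhom V W) (g : JFhom U V) S h => f S (g S h) |};
  intros; apply proof_irrelevance.
Defined.

Definition JFplusOb := {U : JFob | maximal (proj1_sig U)}.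

Definition JFplusCat : Category.
Proof.
  refine {| Ob := JFplusOb; Hom := fun U V => JFhom (proj1_sig U) (proj1_sig V);
            cid := fun U S h => h;
            ccomp := fun U V W (f : JFhom _ _) (g : JFhom _ _) S h => f S (g S h) |};
  intros; apply proof_irrelevance.
Defined.

Definition Iota : Functor JFplusCat JFCat.
Proof.
  refine {| fob := fun U : JFplusCat => (proj1_sig U : JFCat);
            fmap := fun U V (f : JFhom _ _) => f |}; reflexivity.
Defined.

Definition JCob := {L : Poset & {e : P -> L | is_join_completion e}}.
Definition jc_L (x : JCob) : Poset := projT1 x.
Definition jc_e (x : JCob) : P -> jc_L x := proj1_sig (projT2 x).

Definition JChom (x y : JCob) :=
  {f : jc_L x -> jc_L y | join_preserving f /\ forall p, f (jc_e x p) = jc_e y p}.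

Definition JCid (x : JCob) : JChom x x.
Proof.
  exists (fun z => z); split.
  - intros S z h; replace (image (fun z => z) S) with S; [exact h|].
    apply functional_extensionality; intro y; apply propositional_extensionality;
    unfold image; split; [intros; exists y; auto | intros [w [hw ->]]; exact hw].
  - reflexivity.
Defined.

Definition JCcomp (x y z : JCob) (f : JChom y z) (g : JChom x y) : JChom x z.
Proof.
  exists (fun t => proj1_sig f (proj1_sig g t)); split.
  - apply join_preserving_comp; [apply (proj2_sig f) | apply (proj2_sig g)].
  - intro p; rewrite (proj2 (proj2_sig g)); apply (proj2 (proj2_sig f)).
Defined.

Definition JCCat : Category.
Proof.
  refine {| Ob := JCob; Hom := JChom; cid := JCid; ccomp := JCcomp |};
  intros; apply sig_eq; reflexivity.
Defined.

Definition FrmOb := {x : JCob | is_frame (jc_L x)}.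
Definition FrmHom (x y : FrmOb) :=
  {h : JChom (proj1_sig x) (proj1_sig y) | meet_preserving (proj1_sig h)}.

Definition FrmCat : Category.
Proof.
  refine {| Ob := FrmOb; Hom := FrmHom;
            cid := fun x => exist (fun h : JChom _ _ => meet_preserving (proj1_sig h)) (JCid (proj1_sig x)) (fun a b m h => h);
            ccomp := fun x y z (f : FrmHom y z) (g : FrmHom x y) =>
               exist _ (JCcomp (proj1_sig f) (proj1_sig g))
                 (meet_preserving_comp (proj2_sig f) (proj2_sig g)) |};
  intros; apply sig_eq; apply sig_eq; reflexivity.
Defined.

Definition InclFrm : Functor FrmCat JCCat.
Proof.
  refine {| fob := fun x : FrmCat => (proj1_sig x : JCCat);
            fmap := fun x y (f : FrmHom x y) => proj1_sig f |}; reflexivity.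
Defined.

Definition mkFrmOb (U : (P -> Prop) -> Prop) (pf : is_join_completion (eta U))
  (fr : is_frame (IdealPoset U)) : FrmOb :=
  exist (fun x : JCob => is_frame (jc_L x))
        (existT (fun L : Poset => {e : P -> L | is_join_completion e})
                (IdealPoset U) (exist _ (eta U) pf)) fr.

End JoinSpec.

(* Main.v *)
Require Import Defs.
From Stdlib Require Import ProofIrrelevance FunctionalExtensionality PropExtensionality ClassicalEpsilon.
Set Implicit Arguments.
Unset Strict Implicit.

Lemma lub_unique (L : Poset) (S : L -> Prop) x y : is_lub S x -> is_lub S y -> x = y.
Proof. intros [h1 h2] [h3 h4]. apply ple_anti; auto. Qed.

Lemma glb_unique (L : Poset) (S : L -> Prop) x y : is_glb S x -> is_glb S y -> x = y.
Proof. intros [h1 h2] [h3 h4]. apply ple_anti; auto. Qed.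

Lemma glb_sym (L : Poset) (a b m : L) : is_glb (pair a b) m -> is_glb (pair b a) m.
Proof.
  intros [h1 h2]; split.
  - intros s hs; apply h1; destruct hs; [right|left]; auto.
  - intros y hy; apply h2; intros s hs; apply hy; destruct hs; [right|left]; auto.
Qed.

Lemma complete_glb (L : Poset) : complete L -> forall S : L -> Prop, exists m, is_glb S m.
Proof.
  intros hc S. destruct (hc (is_lb S)) as [m [h1 h2]]. exists m; split.
  - intros s hs. apply h2. intros y hy. apply hy, hs.
  - intros y hy. apply h1, hy.
Qed.

Definition lubL (L : Poset) (hc : complete L) (S : L -> Prop) : L :=
  proj1_sig (constructive_indefinite_description _ (hc S)).
Lemma lubL_spec (L : Poset) (hc : complete L) (S : L -> Prop) : is_lub S (lubL hc S).
Proof. unfold lubL. exact (proj2_sig (constructive_indefinite_description _ (hc S))). Qed.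

Section Ideals.
Variable P : Poset.

Lemma Gamma_ideal (U : (P -> Prop) -> Prop) X : is_ideal U (Gamma U X).
Proof.
  split.
  - intros x y hxy hy C hC hX. apply (proj1 hC x y hxy). apply hy; auto.
  - intros S x hS hsub hl C hC hX. apply (proj2 hC S x hS); auto.
    intros s hs; apply hsub; auto.
Qed.

Lemma Gamma_incl (U : (P -> Prop) -> Prop) (X : P -> Prop) x : X x -> Gamma U X x.
Proof. intros h C _ hX; auto. Qed.

Lemma Gamma_least (U : (P -> Prop) -> Prop) (X C : P -> Prop) :
  is_ideal U C -> (forall x, X x -> C x) -> forall x, Gamma U X x -> C x.
Proof. intros hC hX x hx; apply hx; auto. Qed.

Lemma Gamma_monoX (U : (P -> Prop) -> Prop) (X Y : P -> Prop) :
  (forall x, X x -> Y x) -> forall x, Gamma U X x -> Gamma U Y x.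
Proof. intros h x hx C hC hY. apply hx; auto. Qed.

Lemma Gamma_mono_spec (W M : (P -> Prop) -> Prop) :
  (forall T, W T -> M T) -> forall X x, Gamma W X x -> Gamma M X x.
Proof.
  intros h X x hx C hC hX. apply hx; auto. split; [apply hC|].
  intros S y hS; apply (proj2 hC); auto.
Qed.

Definition GammaI (U : (P -> Prop) -> Prop) (X : P -> Prop) : IdealPoset U :=
  exist _ (Gamma U X) (Gamma_ideal U X).

Definition bigU (U : (P -> Prop) -> Prop) (SS : IdealPoset U -> Prop) : P -> Prop :=
  fun x => exists C, SS C /\ proj1_sig C x.

Lemma GammaI_lub (U : (P -> Prop) -> Prop) (SS : IdealPoset U -> Prop) :
  is_lub SS (GammaI U (bigU SS)).
Proof.
  split.
  - intros C hC x hx. apply Gamma_incl. exists C; auto.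
  - intros D hD x hx. apply (Gamma_least (proj2_sig D) (X := bigU SS)); auto.
    intros y [C [hC hy]]. exact (hD C hC y hy).
Qed.

Lemma ideals_complete (U : (P -> Prop) -> Prop) : complete (IdealPoset U).
Proof. intros SS. exists (GammaI U (bigU SS)). apply GammaI_lub. Qed.

Lemma inter_ideal (U : (P -> Prop) -> Prop) (a b : IdealPoset U) :
  is_ideal U (fun x => proj1_sig a x /\ proj1_sig b x).
Proof.
  destruct a as [a [ha1 ha2]], b as [b [hb1 hb2]]; simpl. split.
  - intros x y h [h1 h2]; split; eauto.
  - intros S x hS hsub hl; split; [apply (ha2 S x hS) | apply (hb2 S x hS)]; auto;
      intros s hs; apply hsub; auto.
Qed.

Definition interI (U : (P -> Prop) -> Prop) (a b : IdealPoset U) : IdealPoset U :=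
  exist _ _ (inter_ideal a b).

Lemma interI_glb (U : (P -> Prop) -> Prop) (a b : IdealPoset U) : is_glb (pair a b) (interI a b).
Proof.
  split.
  - intros s [-> | ->] x [h1 h2]; auto.
  - intros y hy x hx; split; [apply (hy a (or_introl eq_refl)) | apply (hy b (or_intror eq_refl))]; auto.
Qed.

Lemma glb_set (U : (P -> Prop) -> Prop) (a b m : IdealPoset U) :
  is_glb (pair a b) m -> forall x, proj1_sig m x <-> proj1_sig a x /\ proj1_sig b x.
Proof.
  intros h. rewrite (glb_unique h (interI_glb a b)). simpl. tauto.
Qed.

Lemma lub_set (U : (P -> Prop) -> Prop) (SS : IdealPoset U -> Prop) j :
  is_lub SS j -> j = GammaI U (bigU SS).
Proof. intros h. exact (lub_unique h (GammaI_lub SS)). Qed.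

Lemma ideal_lub_eta (U : (P -> Prop) -> Prop) (C : IdealPoset U) :
  is_lub (fun y => exists p, proj1_sig C p /\ y = eta U p) C.
Proof.
  split.
  - intros y [p [hp ->]] x hx; exact (proj1 (proj2_sig C) x p hx hp).
  - intros D hD x hx; apply (hD (eta U x)); [exists x; auto | apply ple_refl].
Qed.

Lemma eta_jc (U : (P -> Prop) -> Prop) : is_join_completion (eta U).
Proof.
  split; [apply ideals_complete|]. split.
  - intros p q; split.
    + intros h x hx; exact (ple_trans hx h).
    + intros h; apply (h p (ple_refl p)).
  - intros C. exists (fun y => exists p, proj1_sig C p /\ y = eta U p). split.
    + intros y [p [_ ->]]; eauto.
    + apply ideal_lub_eta.
Qed.

Lemma eta_lub (U : (P -> Prop) -> Prop) S x :
  U S -> is_lub S x -> is_lub (image (eta U) S) (eta U x).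
Proof.
  intros hS hl. split.
  - intros y [s [hs ->]] z hz; exact (ple_trans hz (proj1 hl s hs)).
  - intros D hD z hz.
    assert (hx : proj1_sig D x).
    { apply (proj2 (proj2_sig D) S x hS); auto.
      intros s hs. apply (hD (eta U s)); [exists s; auto | apply ple_refl]. }
    exact (proj1 (proj2_sig D) z x hz hx).
Qed.

Lemma Ue_of (U : (P -> Prop) -> Prop) : is_join_spec U -> forall S, U S -> Ue (eta U) S.
Proof.
  intros hjs S hS. destruct (proj1 hjs S hS) as [x hx]. exists x; split; auto.
  apply eta_lub; auto.
Qed.

Definition FL (U : (P -> Prop) -> Prop) :=
  forall S x p, U S -> is_lub S x -> ple p x ->
    Gamma U (fun y => ple y p /\ exists s, S s /\ ple y s) p.

Lemma FL_law (U : (P -> Prop) -> Prop) : FL U -> forall (A X : P -> Prop), is_ideal U A ->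
  (forall x y, ple x y -> X y -> X x) ->
  forall y, A y -> Gamma U X y -> Gamma U (fun z => A z /\ X z) y.
Proof.
  intros hF A X hA hX.
  assert (hD : is_ideal U (fun y => forall z, ple z y -> A z -> Gamma U (fun z => A z /\ X z) z)).
  { split.
    - intros x y hxy hy z hzx hz. apply hy; auto. exact (ple_trans hzx hxy).
    - intros S x hS hsub hl z hzx hz.
      apply (Gamma_least (Gamma_ideal U _) (X := fun w => ple w z /\ exists s, S s /\ ple w s)).
      + intros w [hwz [s [hs hws]]]. apply (hsub s hs w hws). exact (proj1 hA w z hwz hz).
      + exact (hF S x z hS hl hzx). }
  intros y hy hG.
  refine (Gamma_least hD _ hG y (ple_refl y) hy).
  intros x hx z hzx hz. apply Gamma_incl; split; auto. apply (hX z x hzx hx).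
Qed.

Lemma FL_fg (U : (P -> Prop) -> Prop) : FL U -> frame_generating U.
Proof.
  intros hF. split; [apply ideals_complete|].
  intros a SS j m hj hm.
  assert (E : m = GammaI U (bigU (fun t => exists s, SS s /\ is_glb (pair a s) t))).
  { apply ideal_le_anti; intros x hx.
    - simpl. apply (proj1 (glb_set hm x)) in hx. destruct hx as [hax hjx].
      rewrite (lub_set hj) in hjx. simpl in hjx.
      apply (Gamma_monoX (X := fun z => proj1_sig a z /\ bigU SS z)).
      + intros z [haz [s [hs hsz]]]. exists (interI a s); split.
        * exists s; split; auto; apply interI_glb.
        * simpl; auto.
      + apply FL_law; auto.
        * apply (proj2_sig a).
        * intros u v huv [C [hC hv]]. exists C; split; auto.
          exact (proj1 (proj2_sig C) u v huv hv).
    - refine (Gamma_least (proj2_sig m) _ hx).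
      intros z [t [[s [hs ht]] htz]]. apply (proj2 (glb_set hm z)).
      apply (proj1 (glb_set ht z)) in htz. destruct htz as [h1 h2]. split; auto.
      exact (proj1 hj s hs z h2). }
  rewrite E. apply GammaI_lub.
Qed.

Lemma fg_FL (U : (P -> Prop) -> Prop) : frame_generating U -> FL U.
Proof.
  intros [_ law] S x p hS hl hpx.
  pose (SS := fun C : IdealPoset U => exists s, S s /\ C = eta U s).
  pose proof (law (eta U p) SS _ _ (GammaI_lub SS) (interI_glb (eta U p) (GammaI U (bigU SS)))) as hm.
  assert (hle : ple (interI (eta U p) (GammaI U (bigU SS)))
                    (GammaI U (fun y => ple y p /\ exists s, S s /\ ple y s))).
  { apply (proj2 hm). intros t [C [[s [hs ->]] ht]] z hz.
    apply (proj1 (glb_set ht z)) in hz. destruct hz as [hzp hzs].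
    apply Gamma_incl. split; auto. exists s; auto. }
  apply (hle p). simpl. split; [apply ple_refl|].
  apply (proj1 (Gamma_ideal U _) p x hpx). apply (proj2 (Gamma_ideal U _) S x hS); auto.
  intros s hs. apply Gamma_incl. exists (eta U s); split; [exists s; auto | simpl; apply ple_refl].
Qed.

End Ideals.

Section JC.
Variable P : Poset.

Definition etaOb (U : (P -> Prop) -> Prop) (pf : is_join_completion (eta U)) : JCob P :=
  existT (fun L : Poset => {e : P -> L | is_join_completion e}) (IdealPoset U) (exist _ (eta U) pf).

Lemma hom_unique (U : (P -> Prop) -> Prop) (pf : is_join_completion (eta U)) (y : JCob P) (f g : JChom (etaOb pf) y) : f = g.
Proof.
  apply sig_eq. apply functional_extensionality. intro C.
  destruct f as [f [fj fe]], g as [g [gj ge]]; simpl in *.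
  assert (hfg : forall p, f (eta U p) = g (eta U p)).
  { intro p. exact (eq_trans (fe p) (eq_sym (ge p))). }
  pose proof (ideal_lub_eta C) as hl.
  apply (lub_unique (fj _ _ hl)).
  assert (E : image f (fun y : IdealPoset U => exists p, proj1_sig C p /\ y = eta U p)
    = image g (fun y : IdealPoset U => exists p, proj1_sig C p /\ y = eta U p)).
  2:{ exact (eq_ind _ (fun T => is_lub T (g C)) (gj _ _ hl) _ (eq_sym E)). }
  { apply functional_extensionality; intro z; apply propositional_extensionality.
    unfold image; split; intros [w [[p [hp ->]] ->]]; exists (eta U p); (split; [eauto|]).
    + apply hfg.
    + symmetry; apply hfg. }
Qed.

Lemma hom_Ue (U : (P -> Prop) -> Prop) (hjs : is_join_spec U) (pf : is_join_completion (eta U)) (y : JCob P)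
  (f : JChom (etaOb pf) y) : forall S, U S -> Ue (jc_e y) S.
Proof.
  intros S hS. destruct (proj1 hjs S hS) as [x hx]. exists x; split; auto.
  destruct f as [f [fj fe]].
  pose proof (fj _ _ (eta_lub hS hx)) as h.
  assert (E : (fun p => f (eta U p)) = jc_e y) by (apply functional_extensionality; intro p; apply fe).
  rewrite image_comp, E in h. rewrite <- (fe x). exact h.
Qed.

Lemma K_ideal (L : Poset) (e : P -> L) (U : (P -> Prop) -> Prop) :
  (forall p q, ple p q -> ple (e p) (e q)) -> (forall S, U S -> Ue e S) ->
  forall b, is_ideal U (fun z => ple (e z) b).
Proof.
  intros emb hU b. split.
  - intros x z hxz hz; exact (ple_trans (emb x z hxz) hz).
  - intros S x hS hsub hl. destruct (hU S hS) as [m [hm hem]].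
    rewrite (lub_unique hl hm). apply (proj2 hem).
    intros w [s [hs ->]]; auto.
Qed.

Section Ext.
Variable U : (P -> Prop) -> Prop.
Variable y : JCob P.
Hypothesis hU : forall S, U S -> Ue (jc_e y) S.

Let hjc : is_join_completion (jc_e y) := proj2_sig (projT2 y).

Definition extf (C : IdealPoset U) : jc_L y :=
  lubL (proj1 (proj2_sig (projT2 y))) (image (jc_e y) (proj1_sig C)).

Lemma ext_spec C : is_lub (image (jc_e y) (proj1_sig C)) (extf C).
Proof. apply lubL_spec. Qed.

Lemma ext_mono (C D : IdealPoset U) : ple C D -> ple (extf C) (extf D).
Proof.
  intros h. apply (proj2 (ext_spec C)). intros z [x [hx ->]].
  apply (proj1 (ext_spec D)). exists x; split; auto.
Qed.

Lemma emb p q : ple p q <-> ple (jc_e y p) (jc_e y q).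
Proof. exact (proj1 (proj2 hjc) p q). Qed.

Lemma ext_join : join_preserving extf.
Proof.
  intros SS J hJ. split.
  - intros w [C [hC ->]]. apply ext_mono. exact (proj1 hJ C hC).
  - intros b hb. apply (proj2 (ext_spec J)). intros w [z [hz ->]].
    pose (K := exist (is_ideal U) _ (K_ideal (fun p q => proj1 (emb p q)) hU b) : IdealPoset U).
    assert (hJK : ple J K).
    { apply (proj2 hJ). intros C hC x hx. simpl.
      apply ple_trans with (extf C).
      - apply (proj1 (ext_spec C)); exists x; auto.
      - apply hb; exists C; auto. }
    exact (hJK z hz).
Qed.

Lemma ext_eta p : extf (eta U p) = jc_e y p.
Proof.
  apply (lub_unique (ext_spec _)). split.
  - intros w [x [hx ->]]. apply emb; exact hx.
  - intros b hb; apply hb; exists p; split; [apply ple_refl|auto].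
Qed.

Definition ext (pf : is_join_completion (eta U)) : JChom (etaOb (U:=U) pf) y :=
  exist _ extf (conj ext_join ext_eta).

Lemma ext_meet : is_frame (jc_L y) -> meet_preserving extf.
Proof.
  intros [hc law] a b m hm. split.
  - intros s [-> | ->]; apply ext_mono; apply (proj1 hm); [left|right]; auto.
  - intros z hz. destruct (complete_glb hc (pair (extf a) (extf b))) as [g hg].
    apply ple_trans with g; [apply (proj2 hg); exact hz|].
    pose proof (law (extf b) (image (jc_e y) (proj1_sig a)) (extf a) g (ext_spec a) (glb_sym hg)) as h1.
    apply (proj2 h1). intros t [s [[c [hc' ->]] ht]].
    pose proof (law (jc_e y c) (image (jc_e y) (proj1_sig b)) (extf b) t (ext_spec b) (glb_sym ht)) as h2.
    apply (proj2 h2). intros t' [s' [[d [hd ->]] ht']].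
    destruct (proj2 (proj2 hjc) t') as [S [hSe hSl]].
    apply (proj2 hSl). intros w hw. destruct (hSe w hw) as [p ->].
    assert (hpt : ple (jc_e y p) t') by exact (proj1 hSl _ hw).
    assert (hpc : ple p c) by exact (proj2 (emb p c) (ple_trans hpt (proj1 ht' _ (or_introl eq_refl)))).
    assert (hpd : ple p d) by exact (proj2 (emb p d) (ple_trans hpt (proj1 ht' _ (or_intror eq_refl)))).
    assert (hpm : proj1_sig m p).
    { assert (hle : ple (eta U p) m).
      { apply (proj2 hm). intros s0 [-> | ->] x hx; simpl in *.
        - exact (proj1 (proj2_sig a) x c (ple_trans hx hpc) hc').
        - exact (proj1 (proj2_sig b) x d (ple_trans hx hpd) hd). }
      apply hle; apply ple_refl. }
    apply (proj1 (ext_spec m)). exists p; auto.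
Qed.

End Ext.

Lemma Ue_mono (x y : JCob P) (h : JChom x y) : forall S, Ue (jc_e x) S -> Ue (jc_e y) S.
Proof.
  intros S [m [hm hem]]. exists m; split; auto. destruct h as [f [fj fe]].
  pose proof (fj _ _ hem) as h. rewrite image_comp in h.
  assert (E : (fun p => f (jc_e x p)) = jc_e y) by (apply functional_extensionality; intro p; apply fe).
  rewrite E, fe in h. exact h.
Qed.

Lemma minus_mono (V V' : (P -> Prop) -> Prop) : (forall S, V S -> V' S) -> forall S, minus V S -> minus V' S.
Proof. intros h S [W [h1 [h2 [h3 h4]]]]; exists W; split; [exact h1|]; split; [exact h2|]; split; [intros T hT; apply h, h3, hT | exact h4]. Qed.

Lemma minus_sub (V : (P -> Prop) -> Prop) S : minus V S -> V S.
Proof. intros [W [_ [_ [h hS]]]]; auto. Qed.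

Lemma single_lub (p : P) : is_lub (singleton p) p.
Proof.
  split.
  - intros s hs; unfold singleton in hs; subst; apply ple_refl.
  - intros b hb; apply hb; unfold singleton; reflexivity.
Qed.

Section Minus.
Variable L : Poset.
Variable e : P -> L.
Hypothesis hjc : is_join_completion e.

Let M := minus (Ue e).

Lemma emb' p q : ple p q -> ple (e p) (e q).
Proof. exact (proj1 (proj1 (proj2 hjc) p q)). Qed.

Lemma Ue_single p : Ue e (singleton p).
Proof.
  exists p. split; [apply single_lub|]. split.
  - intros w [s [hs ->]]. unfold singleton in hs; subst; apply ple_refl.
  - intros b hb; apply hb; exists p; split; unfold singleton; reflexivity.
Qed.

Definition W0 : (P -> Prop) -> Prop := fun S => exists p, S = singleton p.

Lemma W0_js : is_join_spec W0.
Proof. split. intros S [p ->]; exists p; apply single_lub. intros p; exists p; auto. Qed.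

Lemma W0_fg : frame_generating W0.
Proof.
  apply FL_fg. intros S x q [p ->] hl hqx.
  rewrite <- (lub_unique (single_lub p) hl) in hqx. apply Gamma_incl.
  split; [apply ple_refl|]. exists p; split; [unfold singleton; reflexivity|auto].
Qed.

Lemma minus_FL : FL M.
Proof.
  intros S x p [W [hW [hfg [hWV hS]]]] hl hpx.
  apply (Gamma_mono_spec (W := W)).
  - intros T hT; exists W; auto.
  - exact (fg_FL hfg hS hl hpx).
Qed.

Lemma minus_js : is_join_spec M.
Proof.
  split.
  - intros S [W [hW [_ [_ hS]]]]; exact (proj1 hW S hS).
  - intros p; exists W0; split; [apply W0_js|]; split; [apply W0_fg|]; split.
    + intros T [q ->]; apply Ue_single.
    + exists p; reflexivity.
Qed.

Lemma minus_fg : frame_generating M.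
Proof. apply FL_fg, minus_FL. Qed.

Lemma Uplus_sub : forall S, Uplus M S -> Ue e S.
Proof.
  intros S [x [hl hG]]. exists x; split; auto.
  destruct (proj1 hjc (image e S)) as [b hb].
  assert (he : ple (e x) b).
  { refine (Gamma_least (K_ideal emb' (fun T hT => minus_sub hT) b) _ hG).
    intros s hs. apply (proj1 hb). exists s; auto. }
  split.
  - intros w [s [hs ->]]. apply emb', (proj1 hl s hs).
  - intros c hc. exact (ple_trans he (proj2 hb c hc)).
Qed.

Lemma M_sub_plus : forall S, M S -> Uplus M S.
Proof.
  intros S hS. destruct (proj1 minus_js S hS) as [x hx]. exists x; split; auto.
  intros C hC hSC. exact (proj2 hC S x hS hSC hx).
Qed.

Lemma plus_FL : FL (Uplus M).
Proof.
  intros S x p [x' [hl' hG]] hl hpx. rewrite (lub_unique hl' hl) in hG.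
  apply (Gamma_mono_spec M_sub_plus).
  apply (FL_law minus_FL (A := fun z => ple z p) (X := fun y => exists s, S s /\ ple y s)).
  - apply downset_ideal.
  - intros u v huv [s [hs hvs]]; exists s; split; auto; eapply ple_trans; eauto.
  - apply ple_refl.
  - apply (proj1 (Gamma_ideal M _) p x hpx).
    apply (Gamma_monoX (X := S)); auto.
    intros s hs; exists s; split; auto; apply ple_refl.
Qed.

Lemma plus_js : is_join_spec (Uplus M).
Proof.
  split.
  - intros S [x [hx _]]; eauto.
  - intros p; exists p; split; [apply single_lub | apply Gamma_incl; unfold singleton; reflexivity].
Qed.

Lemma minus_max : maximal M.
Proof.
  intros S; split; [apply M_sub_plus|]. intros hS.
  exists (Uplus M). split; [apply plus_js|]. split; [apply FL_fg, plus_FL|]. split.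
  - apply Uplus_sub.
  - exact hS.
Qed.

End Minus.
End JC.

Lemma adj_thin (C D : Category) (F : Functor C D) (G : Functor D C) :
  (forall c d (h h' : Hom (F c) d), h = h') -> (forall c d (k k' : Hom c (G d)), k = k') ->
  (forall c d, Hom (F c) d -> Hom c (G d)) -> (forall c d, Hom c (G d) -> Hom (F c) d) ->
  Adjunction F G.
Proof. intros u1 u2 phi psi. exists phi, psi. repeat split; intros; auto. Qed.

Section Main.
Variable P : Poset.

Definition Fob (U : JFCat P) : FrmCat P :=
  mkFrmOb (eta_jc (proj1_sig U)) (proj2 (proj2_sig U)).

Definition Fmap (U V : JFCat P) (h : Hom U V) : Hom (Fob U) (Fob V) :=
  exist _ (ext (y := proj1_sig (Fob V)) (fun S hS => Ue_of (proj1 (proj2_sig V)) (h S hS)) (eta_jc (proj1_sig U)))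
    (ext_meet (U := proj1_sig U) (proj2_sig (Fob V))).

Definition FF : Functor (JFCat P) (FrmCat P).
Proof.
  refine {| fob := Fob; fmap := Fmap |}.
  - intros a. apply sig_eq. apply hom_unique.
  - intros a b c f g. apply sig_eq. apply hom_unique.
Defined.

Definition Gob (x : JCCat P) : JFplusCat P :=
  exist _ (exist _ (minus (Ue (jc_e x)))
            (conj (minus_js (jc_e x)) (minus_fg (jc_e x))))
        (minus_max (proj2_sig (projT2 x))).

Definition GG : Functor (JCCat P) (JFplusCat P).
Proof.
  refine {| fob := Gob; fmap := fun x y (h : JChom x y) => (fun S hS => minus_mono (Ue_mono h) hS) : Hom (Gob x) (Gob y) |};
  intros; exact (proof_irrelevance (JFhom _ _) _ _).
Defined.

Lemma to_minus (U : JFob P) (y : JCob P) :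
  (forall S, proj1_sig U S -> Ue (jc_e y) S) -> forall S, proj1_sig U S -> minus (Ue (jc_e y)) S.
Proof.
  intros h S hS. exists (proj1_sig U). split; [apply (proj1 (proj2_sig U))|].
  split; [apply (proj2 (proj2_sig U))|]. split; auto.
Qed.

End Main.

Theorem corollary5p14 (P : Poset) :
  exists (F : Functor (JFCat P) (FrmCat P)) (G : Functor (JCCat P) (JFplusCat P)),
    (forall U : JFob P, exists pf fr, F U = @mkFrmOb P (proj1_sig U) pf fr) /\
    (forall x : JCob P, proj1_sig (proj1_sig (G x)) = minus (Ue (jc_e x))) /\
    Adjunction (FComp (InclFrm P) (FComp F (Iota P))) G /\
    Adjunction F (FComp (Iota P) (FComp G (InclFrm P))) /\
    Adjunction (FComp F (Iota P)) (FComp G (InclFrm P)).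
Proof.
  exists (FF P), (GG P). split; [|split; [|split; [|split]]].
  - intros U. eexists; eexists; reflexivity.
  - intros x; reflexivity.
  - apply adj_thin.
    + intros c d h h'. apply hom_unique.
    + intros; exact (proof_irrelevance (JFhom _ _) _ _).
    + intros c d h. exact (to_minus (hom_Ue (proj1 (proj2_sig (proj1_sig c))) h)).
    + intros c d k. exact (ext (fun S hS => minus_sub (k S hS)) _).
  - apply adj_thin.
    + intros c d h h'. apply sig_eq. apply hom_unique.
    + intros; exact (proof_irrelevance (JFhom _ _) _ _).
    + intros c d h. exact (to_minus (hom_Ue (proj1 (proj2_sig c)) (proj1_sig h))).
    + intros c d k. exact (exist _ (ext (fun S hS => minus_sub (k S hS)) _)
                                    (ext_meet (proj2_sig d))).
  - apply adj_thin.
    + intros c d h h'. apply sig_eq. apply hom_unique.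
    + intros; exact (proof_irrelevance (JFhom _ _) _ _).
    + intros c d h. exact (to_minus (hom_Ue (proj1 (proj2_sig (proj1_sig c))) (proj1_sig h))).
    + intros c d k. exact (exist _ (ext (fun S hS => minus_sub (k S hS)) _)
                                    (ext_meet (proj2_sig d))).
Qed.
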